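(* Let $q\in\mathbb C^\times$ with $|q|\ne1$, and let $A_q$ be the algebra with vector-space basis $\{z^nt^k:n\in\mathbb Z,k\in\mathbb N\}$ and multiplication $z^mt^k\cdot z^nt^l=q^{kn}z^{m+n}t^{k+l}$, endowed with the strongest locally convex topology. Write $u=\sum_{k}u_k t^k$ with $u_k=\sum_n u_{k,n}z^n$ Laurent polynomials, and for $C\ge1$ let $\|u_k\|_C=\sum_n|u_{k,n}|C^{|n|}$. (1) If $|q|<1$ and $D\ge1$, $K\in\mathbb N$ satisfy $D|q|^K\ge1$, then $p_{D,K}(u)=\sum_{k=0}^K\|u_k\|_{D|q|^k}$ is a submultiplicative seminorm on $A_q$; conversely every submultiplicative seminorm on $A_q$ is dominated by a constant multiple of some such $p_{D,K}$. (2) If $|q|>1$ and $D\ge1$, $K\in\mathbb N$ satisfy $D/|q|^K\ge1$, then $p_{D,K}(u)=\sum_{k=0}^K\|u_k\|_{D/|q|^k}$ is a submultiplicative seminorm on $A_q$; conversely every submultiplicative seminorm on $A_q$ is dominated by a constant multiple of some such $p_{D,K}$.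
   Context: $A_q$ is the algebra $\mathcal R_q(\mathbb C^\times\ltimes\mathbb C)$ (quantum `$az+b$'), i.e. skew polynomials $\sum_k u_k t^k$ with Laurent-polynomial coefficients $u_k$ in $z$, where $t\cdot z=q\,z\cdot t$; equivalently $(u\cdot v)_k=\sum_{i=0}^k u_i\cdot\varphi^i(v_{k-i})$ with $\varphi(z^n)=q^nz^n$. A seminorm $p$ is submultiplicative if $p(uv)\le p(u)p(v)$. *)

(* Defs.v *)
From mathcomp Require Import all_boot all_order all_algebra.
From mathcomp Require Import complex.
From mathcomp Require Import boolp classical_sets reals.
Import GRing.Theory Num.Theory.
Set Implicit Arguments.
Unset Strict Implicit.
Unset Printing Implicit Defensive.
Local Open Scope ring_scope.

(* Elements of A_q are represented by their coefficient families
   u k n = u_{k,n} = coefficient of z^n t^k  (k : nat, n : int),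
   required to be finitely supported (predicate inA). *)
Definition Aq (R : realType) := nat -> int -> R[i].

Definition bounded_by (R : realType) (N : nat) (u : Aq R) : Prop :=
  forall (k : nat) (n : int), (N < k)%N \/ (N < absz n)%N -> u k n = 0.

Definition inA (R : realType) (u : Aq R) : Prop := exists N : nat, bounded_by N u.

Definition bnd (R : realType) (u : Aq R) : nat := get (fun N : nat => bounded_by N u).

Definition addA (R : realType) (u v : Aq R) : Aq R := fun k n => u k n + v k n.
Definition scaleA (R : realType) (c : R[i]) (u : Aq R) : Aq R := fun k n => c * u k n.

(* product: z^m t^i . z^n' t^l = q^(i n') z^(m+n') t^(i+l), i.e.
   (uv)_{k,n} = sum_{i<=k} sum_m u_{i,m} q^(i(n-m)) v_{k-i,n-m};
   m ranges over [-N, N] with N a support bound of u (and v). *)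
Definition mulA (R : realType) (q : R[i]) (u v : Aq R) : Aq R :=
  fun k n =>
    let N := maxn (bnd u) (bnd v) in
    \sum_(i < k.+1) \sum_(j < (2 * N).+1)
       let m := (j%:Z - N%:Z)%R in
       u i m * q ^ (i%:Z * (n - m)) * v (k - i)%N (n - m).

Definition normL (R : realType) (N : nat) (C : R) (uk : int -> R[i]) : R :=
  \sum_(j < (2 * N).+1)
     let m := (j%:Z - N%:Z)%R in Normc.normc (uk m) * C ^+ absz m.

Definition pw (R : realType) (w : nat -> R) (K : nat) (u : Aq R) : R :=
  \sum_(k < K.+1) normL (bnd u) (w k) (u k).

Definition is_seminormA (R : realType) (p : Aq R -> R) : Prop :=
  (forall u v, inA u -> inA v -> p (addA u v) <= p u + p v) /\
  (forall (c : R[i]) u, inA u -> p (scaleA c u) = Normc.normc c * p u).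

Definition submultA (R : realType) (q : R[i]) (p : Aq R -> R) : Prop :=
  forall u v, inA u -> inA v -> p (mulA q u v) <= p u * p v.

(* Main.v *)
Require Import Defs.
From mathcomp Require Import all_boot all_order all_algebra.
From mathcomp Require Import complex.
From mathcomp Require Import boolp classical_sets reals.
From mathcomp Require Import zify ring lra.
Require Import Defs.
Import Order.TTheory GRing.Theory Num.Theory.
Set Implicit Arguments.
Unset Strict Implicit.
Unset Printing Implicit Defensive.
Local Open Scope ring_scope.


Lemma nc_ge0 (R : realType) (x : R[i]) : 0 <= Normc.normc x.
Proof. by case: x => a b /=; apply: sqrtr_ge0. Qed.

Lemma ncD (R : realType) (x y : R[i]) :
  Normc.normc (x + y) <= Normc.normc x + Normc.normc y.
Proof. exact: (@le_normcD R x y). Qed.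

Lemma ncX (R : realType) (x : R[i]) n : Normc.normc (x ^+ n) = Normc.normc x ^+ n.
Proof.
elim: n => [|n IH]; first by rewrite !expr0 Normc.normc1.
by rewrite !exprS Normc.normcM IH.
Qed.

Lemma ncZ (R : realType) (x : R[i]) (z : int) :
  Normc.normc (x ^ z) = Normc.normc x ^ z.
Proof.
case: z => n; first by rewrite /= ncX.
by rewrite /= Normc.normcV ncX.
Qed.

Lemma nc_sum (R : realType) (I : Type) (s : seq I) (F : I -> R[i]) :
  Normc.normc (\sum_(i <- s) F i) <= \sum_(i <- s) Normc.normc (F i).
Proof.
elim: s => [|x s IH]; first by rewrite !big_nil Normc.normc0.
rewrite !big_cons. have := ncD (F x) (\sum_(i <- s) F i). move=> h. apply: (le_trans h). exact: lerD.
Qed.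

Lemma sum_pick (V : nmodType) (T : eqType) (s : seq T) (x0 : T) (F : T -> V) :
  uniq s -> \sum_(x <- s) (if x == x0 then F x else 0) = if x0 \in s then F x0 else 0.
Proof.
move=> us; rewrite -big_mkcond -big_filter.
case: ifP => xs; first by rewrite filter_pred1_uniq // big_seq1.
rewrite (_ : filter _ s = [::]) ?big_nil //.
apply/eqP; rewrite -[_ == _]negbK -has_filter.
apply/hasP => -[y ys /eqP yx]; by rewrite -yx ys in xs.
Qed.

Lemma big_sub_uniq (V : nmodType) (T : eqType) (s1 s2 : seq T) (g : T -> V) :
  uniq s1 -> uniq s2 -> {subset s1 <= s2} ->
  (forall x, x \in s2 -> x \notin s1 -> g x = 0) ->
  \sum_(x <- s2) g x = \sum_(x <- s1) g x.
Proof.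
move=> u1 u2 sub z.
rewrite (bigID (mem s1)) /= [X in _ + X]big1_seq ?addr0; last first.
  by move=> x /andP[nx xs]; apply: z.
rewrite -big_filter; apply: perm_big; apply: uniq_perm; first exact: filter_uniq.
  done.
by move=> x; rewrite mem_filter; apply/andP/idP => [[]//|xs]; split=> //; apply: sub.
Qed.

Lemma bndP (R : realType) (u : Aq R) : inA u -> bounded_by (bnd u) u.
Proof. by move=> h; rewrite /bnd; exact: (@getPex _ (fun N : nat => bounded_by N u) h). Qed.

Lemma bb_mono (R : realType) (N N' : nat) (u : Aq R) :
  (N <= N')%N -> bounded_by N u -> bounded_by N' u.
Proof.
move=> le h k n [H|H]; apply: h; [left|right]; exact: leq_ltn_trans H.
Qed.

Definition W (N : nat) : seq int := [seq (j%:Z - N%:Z)%R | j <- iota 0 (2 * N).+1].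

Lemma memW N m : (m \in W N) = (absz m <= N)%N.
Proof.
apply/mapP/idP => [[j] | h].
  rewrite mem_iota add0n => /andP[_ jlt] ->; lia.
exists (absz (m + N%:Z)).
  rewrite mem_iota add0n /=; lia.
lia.
Qed.

Lemma uniqW N : uniq (W N).
Proof.
rewrite map_inj_in_uniq ?iota_uniq // => x y _ _ h; lia.
Qed.

Definition box (K N : nat) : seq (nat * int) := [seq (k, m) | k <- iota 0 K.+1, m <- W N].

Lemma mem_box K N x : (x \in box K N) = (x.1 <= K)%N && (absz x.2 <= N)%N.
Proof.
case: x => k m; apply/allpairsP/idP => [[[a b]] [ha hb [-> ->]] | /andP[hk hm]].
  move: ha hb; rewrite mem_iota memW /=; lia.
by exists (k, m); rewrite mem_iota memW /=; split => //; lia.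
Qed.

Lemma uniq_box K N : uniq (box K N).
Proof.
apply: allpairs_uniq; [exact: iota_uniq | exact: uniqW |].
by move=> [a b] [c d] _ _ /= [-> ->].
Qed.

Lemma normL_W (R : realType) N (C : R) f :
  normL N C f = \sum_(m <- W N) Normc.normc (f m) * C ^+ absz m.
Proof.
rewrite /normL /W big_map.
by rewrite -(big_mkord xpredT (fun j : nat => Normc.normc (f (j%:Z - N%:Z)) * C ^+ absz (j%:Z - N%:Z))) /index_iota subn0.
Qed.

Lemma sumW_widen (V : nmodType) N1 N2 (g : int -> V) :
  (N1 <= N2)%N -> (forall m, (N1 < absz m)%N -> g m = 0) ->
  \sum_(m <- W N2) g m = \sum_(m <- W N1) g m.
Proof.
move=> le z; apply: big_sub_uniq; rewrite ?uniqW //.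
  by move=> m; rewrite !memW => h; apply: leq_trans le.
by move=> m _; rewrite memW -ltnNge; apply: z.
Qed.

Lemma sumW_any (V : nmodType) N1 N2 (g : int -> V) :
  (forall m, (N1 < absz m)%N -> g m = 0) -> (forall m, (N2 < absz m)%N -> g m = 0) ->
  \sum_(m <- W N2) g m = \sum_(m <- W N1) g m.
Proof.
move=> z1 z2; case: (leqP N1 N2) => h; first exact: sumW_widen.
by symmetry; apply: sumW_widen => //; exact: ltnW.
Qed.

Lemma sum_box (V : nmodType) K N (g : nat * int -> V) :
  \sum_(x <- box K N) g x = \sum_(k < K.+1) \sum_(m <- W N) g (k : nat, m).
Proof. by rewrite /box big_allpairs -(big_mkord xpredT (fun k : nat => \sum_(m <- W N) g (k, m))) /index_iota subn0. Qed.

Lemma box_widen (V : nmodType) K1 N1 K2 N2 (g : nat * int -> V) :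
  (K1 <= K2)%N -> (N1 <= N2)%N ->
  (forall x, (K1 < x.1)%N \/ (N1 < absz x.2)%N -> g x = 0) ->
  \sum_(x <- box K2 N2) g x = \sum_(x <- box K1 N1) g x.
Proof.
move=> hK hN z; apply: big_sub_uniq; rewrite ?uniq_box //.
  move=> x; rewrite !mem_box => /andP[a b]; apply/andP; split; lia.
move=> x _; rewrite mem_box negb_and -!ltnNge => /orP[h|h]; apply: z; by [left|right].
Qed.

Definition wsum (R : realType) (w : nat -> R) (K : nat) (u : Aq R) (x : nat * int) : R :=
  if (x.1 <= K)%N then Normc.normc (u x.1 x.2) * w x.1 ^+ absz x.2 else 0.

Lemma pw_box (R : realType) (w : nat -> R) K (u : Aq R) L :
  inA u -> bounded_by L u ->
  pw w K u = \sum_(x <- box L L) wsum w K u x.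
Proof.
move=> hu hL.
set M := maxn K L.
have e1 := @box_widen _ L L M L (wsum w K u) (leq_maxr _ _) (leqnn _).
have e2 := @box_widen _ K L M L (wsum w K u) (leq_maxl _ _) (leqnn _).
rewrite -e1; last first.
  move=> [k m] /= H; rewrite /wsum /=; case: ifP => // _.
  by rewrite hL ?Normc.normc0 ?mul0r.
rewrite e2; last first.
  move=> [k m] /= [h|h]; rewrite /wsum /=.
    by rewrite leqNgt h.
  by case: ifP => // _; rewrite hL ?Normc.normc0 ?mul0r //; right.
rewrite sum_box /pw; apply: eq_bigr => k _.
rewrite normL_W /wsum /= -ltnS (ltn_ord k) (@sumW_any _ L (bnd u)) //.
- move=> m h; by rewrite hL ?Normc.normc0 ?mul0r //; right.
- move=> m h; by rewrite (bndP hu) ?Normc.normc0 ?mul0r //; right.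
Qed.


Lemma mulA_any (R : realType) (q : R[i]) (u v : Aq R) (L k : nat) (n : int) :
  inA u -> inA v -> bounded_by L u -> bounded_by L v ->
  mulA q u v k n = \sum_(i < k.+1) \sum_(m <- W L)
     u i m * q ^ (i%:Z * (n - m)) * v (k - i)%N (n - m).
Proof.
move=> hu hv hL1 hL2; rewrite /mulA; apply: eq_bigr => i _.
set N := maxn (bnd u) (bnd v).
rewrite -(big_mkord xpredT (fun j : nat => u i (j%:Z - N%:Z) * q ^ (i%:Z * (n - (j%:Z - N%:Z))) * v (k - i)%N (n - (j%:Z - N%:Z)))).
rewrite /index_iota subn0 -(big_map (fun j : nat => j%:Z - N%:Z) xpredT (fun m => u i m * q ^ (i%:Z * (n - m)) * v (k - i)%N (n - m))).
rewrite -/(W N) (@sumW_any _ L N) //.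
- by move=> m h; rewrite hL1 ?mul0r //; right.
- move=> m h; rewrite (bndP hu) ?mul0r //; right; apply: leq_trans h; exact: leq_maxl.
Qed.

Lemma pair_cond (k a1 b1 : nat) (n a2 b2 : int) :
  ((k, n) == ((a1 + b1)%N, a2 + b2)) = (a1 <= k)%N && ((b1, b2) == ((k - a1)%N, n - a2)).
Proof.
rewrite !xpair_eqE; apply/idP/idP.
  move=> /andP[/eqP h1 /eqP h2]; apply/andP; split; [lia|apply/andP; split; apply/eqP; lia].
move=> /andP[h /andP[/eqP h1 /eqP h2]]; apply/andP; split; apply/eqP; lia.
Qed.

Definition ind (R : realType) (k : nat) (n : int) (a b : nat * int) : R[i] :=
  if (k, n) == ((a.1 + b.1)%N, a.2 + b.2) then 1 else 0.
Arguments ind {R}.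

Lemma mulA_formula (R : realType) (q : R[i]) (u v : Aq R) (L k : nat) (n : int) :
  inA u -> inA v -> bounded_by L u -> bounded_by L v ->
  mulA q u v k n = \sum_(a <- box L L) \sum_(b <- box L L)
     u a.1 a.2 * v b.1 b.2 * q ^ (a.1%:Z * b.2) * ind k n a b.
Proof.
move=> hu hv hL1 hL2; rewrite (mulA_any _ _ _ hu hv hL1 hL2).
pose G (a : nat * int) := if (a.1 <= k)%N then
  u a.1 a.2 * q ^ (a.1%:Z * (n - a.2)) * v (k - a.1)%N (n - a.2) else 0.
have -> : \sum_(i < k.+1) \sum_(m <- W L) u i m * q ^ (i%:Z * (n - m)) * v (k - i)%N (n - m)
   = \sum_(a <- box k L) G a.
  rewrite sum_box; apply: eq_bigr => i _; apply: eq_bigr => m _.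
  by rewrite /G /= -ltnS ltn_ord.
have -> : \sum_(a <- box L L) \sum_(b <- box L L)
     u a.1 a.2 * v b.1 b.2 * q ^ (a.1%:Z * b.2) * ind k n a b = \sum_(a <- box L L) G a.
  apply: eq_bigr => -[a1 a2] _ /=.
  rewrite (eq_bigr (fun b => if b == ((k - a1)%N, n - a2) then
      (if (a1 <= k)%N then u a1 a2 * v b.1 b.2 * q ^ (a1%:Z * b.2) else 0) else 0)); last first.
    move=> [b1 b2] _; rewrite /ind /= pair_cond.
    by case: (a1 <= k)%N; case: (_ == _); rewrite /= ?mulr1 ?mulr0.
  rewrite sum_pick ?uniq_box // /G /=.
  case: ifP => hb; first by case: ifP => // _; rewrite mulrAC.
  case: ifP => // hk; rewrite hL2 ?mulr0 ?mul0r //.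
  move: hb; rewrite mem_box /= => /negbT; rewrite negb_and -!ltnNge => /orP[h|h]; by [left|right].
set M := maxn k L.
rewrite -(@box_widen _ k L M L G (leq_maxl _ _) (leqnn _)); last first.
  move=> [a1 a2] /= [h|h]; rewrite /G /=; [by rewrite leqNgt h | by case: ifP => // _; rewrite hL1 ?mul0r //; right].
rewrite -(@box_widen _ L L M L G (leq_maxr _ _) (leqnn _)) //.
move=> [a1 a2] /= H; rewrite /G /=; case: ifP => // _; by rewrite hL1 ?mul0r.
Qed.


Lemma bb_add (R : realType) L (u v : Aq R) :
  bounded_by L u -> bounded_by L v -> bounded_by L (addA u v).
Proof. by move=> h1 h2 k n H; rewrite /addA h1 // h2 // addr0. Qed.

Lemma bb_scale (R : realType) L (c : R[i]) (u : Aq R) :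
  bounded_by L u -> bounded_by L (scaleA c u).
Proof. by move=> h1 k n H; rewrite /scaleA h1 // mulr0. Qed.

Lemma bb_mul (R : realType) (q : R[i]) L (u v : Aq R) :
  inA u -> inA v -> bounded_by L u -> bounded_by L v -> bounded_by (2 * L) (mulA q u v).
Proof.
move=> hu hv h1 h2 k n H; rewrite (mulA_any _ _ _ hu hv h1 h2).
apply: big1 => i _; apply: big1_seq => m /andP[_ hm]; rewrite memW in hm.
case: H => H.
  case: (leqP i L) => hi; last by rewrite h1 ?mul0r //; left.
  by rewrite h2 ?mulr0 //; left; lia.
by rewrite h2 ?mulr0 //; right; lia.
Qed.

Lemma inA_add (R : realType) (u v : Aq R) : inA u -> inA v -> inA (addA u v).
Proof.
move=> hu hv; exists (maxn (bnd u) (bnd v)); apply: bb_add;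
  apply: bb_mono (bndP _) => //; [exact: leq_maxl | exact: leq_maxr].
Qed.

Lemma inA_scale (R : realType) (c : R[i]) (u : Aq R) : inA u -> inA (scaleA c u).
Proof. by move=> hu; exists (bnd u); apply: bb_scale; apply: bndP. Qed.

Lemma inA_mul (R : realType) (q : R[i]) (u v : Aq R) : inA u -> inA v -> inA (mulA q u v).
Proof.
move=> hu hv; exists (2 * maxn (bnd u) (bnd v))%N; apply: bb_mul => //;
  apply: bb_mono (bndP _) => //; [exact: leq_maxl | exact: leq_maxr].
Qed.

Lemma pw_seminorm (R : realType) (w : nat -> R) K :
  (forall k, (k <= K)%N -> 1 <= w k) -> is_seminormA (pw w K).
Proof.
move=> hw; have w0 : forall k, (k <= K)%N -> 0 <= w k.
  by move=> k hk; apply: le_trans (hw k hk).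
split.
  move=> u v hu hv.
  set L := maxn (bnd u) (bnd v).
  have h1 : bounded_by L u by apply: bb_mono (bndP hu); exact: leq_maxl.
  have h2 : bounded_by L v by apply: bb_mono (bndP hv); exact: leq_maxr.
  rewrite (pw_box _ _ (inA_add hu hv) (bb_add h1 h2)) (pw_box _ _ hu h1) (pw_box _ _ hv h2).
  rewrite -big_split /=; apply: ler_sum => x _; rewrite /wsum; case: ifP => hx; last by rewrite addr0.
  rewrite -mulrDl ler_wpM2r ?exprn_ge0 ?w0 //; exact: ncD.
move=> c u hu.
rewrite (pw_box _ _ (inA_scale c hu) (bb_scale c (bndP hu))) (pw_box _ _ hu (bndP hu)).
rewrite mulr_sumr; apply: eq_bigr => x _; rewrite /wsum; case: ifP => _; last by rewrite mulr0.
by rewrite /scaleA Normc.normcM mulrA.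
Qed.

Lemma weight_key (R : realType) (r : R) (w : nat -> R) K (a1 b1 : nat) (a2 b2 : int) :
  0 <= r ->
  (forall k, (k <= K)%N -> 1 <= w k) ->
  (forall i j, (i + j <= K)%N -> w (i + j)%N <= w i) ->
  (forall i j (m : int), (i + j <= K)%N -> r ^ (i%:Z * m) * w (i + j)%N ^+ absz m <= w j ^+ absz m) ->
  (a1 + b1 <= K)%N ->
  r ^ (a1%:Z * b2) * w (a1 + b1)%N ^+ absz (a2 + b2) <= w a1 ^+ absz a2 * w b1 ^+ absz b2.
Proof.
move=> r0 hw1 hw2 hw3 hK.
have wab : 1 <= w (a1 + b1)%N by apply: hw1.
have w0 : 0 <= w (a1 + b1)%N by apply: le_trans wab.
apply: (@le_trans _ _ (r ^ (a1%:Z * b2) * (w (a1 + b1)%N ^+ absz a2 * w (a1 + b1)%N ^+ absz b2))).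
  rewrite ler_wpM2l ?exprz_ge0 // -exprD; apply: ler_weXn2l => //; lia.
rewrite mulrCA; apply: ler_pM.
- by rewrite exprn_ge0.
- by rewrite mulr_ge0 ?exprz_ge0 ?exprn_ge0.
- rewrite lerXn2r ?nnegrE //; [apply: le_trans (hw1 a1 _); [exact: ler01 | lia] | exact: hw2].
- exact: hw3.
Qed.

Lemma ler_sum_seq' (R : realType) (T : eqType) (s : seq T) (F G : T -> R) :
  (forall x, x \in s -> F x <= G x) -> \sum_(x <- s) F x <= \sum_(x <- s) G x.
Proof.
move=> h; rewrite [X in X <= _]big_seq [X in _ <= X]big_seq; apply: ler_sum => x; exact: h.
Qed.

Lemma wsum_ge0 (R : realType) (w : nat -> R) K (u : Aq R) x :
  (forall k, (k <= K)%N -> 1 <= w k) -> 0 <= wsum w K u x.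
Proof.
move=> hw; rewrite /wsum; case: ifP => // hx.
by rewrite mulr_ge0 ?nc_ge0 ?exprn_ge0 // (le_trans ler01) ?hw.
Qed.

Lemma pw_submult (R : realType) (q : R[i]) (w : nat -> R) K :
  (forall k, (k <= K)%N -> 1 <= w k) ->
  (forall i j, (i + j <= K)%N -> w (i + j)%N <= w i) ->
  (forall i j (m : int), (i + j <= K)%N ->
     Normc.normc q ^ (i%:Z * m) * w (i + j)%N ^+ absz m <= w j ^+ absz m) ->
  submultA q (pw w K).
Proof.
move=> hw1 hw2 hw3 u v hu hv.
set L := maxn (bnd u) (bnd v).
have h1 : bounded_by L u by apply: bb_mono (bndP hu); exact: leq_maxl.
have h2 : bounded_by L v by apply: bb_mono (bndP hv); exact: leq_maxr.
have hm := bb_mul q hu hv h1 h2.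
rewrite (pw_box _ _ (inA_mul q hu hv) hm) (pw_box _ _ hu h1) (pw_box _ _ hv h2).
pose T (y a b : nat * int) := if (y.1 <= K)%N then Normc.normc (u a.1 a.2) * Normc.normc (v b.1 b.2)
   * Normc.normc q ^ (a.1%:Z * b.2) * Normc.normc (ind y.1 y.2 a b) * w y.1 ^+ absz y.2 else 0.
apply: (@le_trans _ _ (\sum_(y <- box (2 * L) (2 * L)) \sum_(a <- box L L) \sum_(b <- box L L) T y a b)).
  apply: ler_sum => y _; rewrite /wsum /T; case: ifP => hy; last first.
    by rewrite big1 // => a _; rewrite big1.
  rewrite (mulA_formula q y.1 y.2 hu hv h1 h2).
  apply: le_trans (ler_wpM2r _ (nc_sum _ _)) _.
    by rewrite exprn_ge0 // (le_trans ler01) ?hw1.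
  rewrite mulr_suml; apply: ler_sum => a _.
  apply: le_trans (ler_wpM2r _ (nc_sum _ _)) _.
    by rewrite exprn_ge0 // (le_trans ler01) ?hw1.
  rewrite mulr_suml; apply: ler_sum => b _.
  by rewrite !Normc.normcM ncZ.
rewrite exchange_big /= mulr_suml; apply: ler_sum_seq' => a ha.
rewrite exchange_big /= mulr_sumr; apply: ler_sum_seq' => b hb.
case: a ha => a1 a2 ha; case: b hb => b1 b2 hb.
rewrite (eq_bigr (fun y => if y == ((a1 + b1)%N, a2 + b2) then
   (if (a1 + b1 <= K)%N then Normc.normc (u a1 a2) * Normc.normc (v b1 b2)
   * Normc.normc q ^ (a1%:Z * b2) * w (a1 + b1)%N ^+ absz (a2 + b2) else 0) else 0)); last first.
  move=> [y1 y2] _; rewrite /T /ind /=.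
  case: eqP => [[-> ->]|_]; last by rewrite Normc.normc0 !mulr0 mul0r; case: ifP.
  by rewrite Normc.normc1 mulr1.
rewrite sum_pick ?uniq_box // ifT; last first.
  by move: ha hb; rewrite !mem_box /=; lia.
case: ifP => hK; last by rewrite mulr_ge0 // wsum_ge0.
rewrite /wsum /= ifT; last by lia.
rewrite ifT; last by lia.
rewrite mulrACA -!mulrA; apply: ler_wpM2l; first exact: nc_ge0. apply: ler_wpM2l; first exact: nc_ge0.
by apply: (weight_key (K:=K)) => //; exact: nc_ge0.
Qed.


Definition mono (R : realType) (x : nat * int) : Aq R := fun k n => if (k, n) == x then 1 else 0.
Arguments mono {R}.

Definition zeroA (R : realType) : Aq R := fun _ _ => 0.
Arguments zeroA {R}.

Definition sumA (R : realType) (I : Type) (s : seq I) (F : I -> Aq R) : Aq R :=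
  fun k n => \sum_(i <- s) F i k n.

Lemma Aq_ext (R : realType) (u v : Aq R) : (forall k n, u k n = v k n) -> u = v.
Proof.
move=> h; apply: (@funext nat (int -> R[i])) => k; apply: (@funext int R[i]) => n; exact: h.
Qed.

Lemma inA_mono (R : realType) x : inA (@mono R x).
Proof.
exists (maxn x.1 (absz x.2)) => k n H; rewrite /mono; case: eqP => // e.
by case: x e H => a b [-> ->] /=; lia.
Qed.

Lemma inA_zero (R : realType) : inA (@zeroA R).
Proof. by exists 0%N. Qed.

Lemma inA_sumA (R : realType) (I : Type) (s : seq I) (F : I -> Aq R) :
  (forall i, inA (F i)) -> inA (sumA s F).
Proof.
move=> hF; elim: s => [|x s IH].
  rewrite (_ : sumA _ _ = zeroA); first exact: inA_zero.
  by apply: Aq_ext => k n; rewrite /sumA big_nil.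
rewrite (_ : sumA _ _ = addA (F x) (sumA s F)); first exact: inA_add.
by apply: Aq_ext => k n; rewrite /sumA big_cons.
Qed.

Lemma p_zero (R : realType) (p : Aq R -> R) : is_seminormA p -> p zeroA = 0.
Proof.
move=> [_ hs]; have := hs 0 zeroA (inA_zero R).
rewrite (_ : scaleA 0 zeroA = zeroA); first by rewrite Normc.normc0 mul0r.
by apply: Aq_ext => k n; rewrite /scaleA mul0r.
Qed.

Lemma p_ge0 (R : realType) (p : Aq R -> R) u : is_seminormA p -> inA u -> 0 <= p u.
Proof.
move=> hp hu; have [ht hs] := hp.
have h1 := ht u (scaleA (-1) u) hu (inA_scale (-1) hu).
rewrite hs // (_ : addA u (scaleA (-1) u) = zeroA) ?p_zero // in h1; last first.
  by apply: Aq_ext => k n; rewrite /addA /scaleA mulN1r subrr.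
rewrite (normcN (1 : Rcomplex R)) Normc.normc1 mul1r in h1; lra.
Qed.

Lemma p_sum (R : realType) (p : Aq R -> R) (I : Type) (s : seq I) (F : I -> Aq R) (c : I -> R[i]) :
  is_seminormA p -> (forall i, inA (F i)) ->
  p (sumA s (fun i => scaleA (c i) (F i))) <= \sum_(i <- s) Normc.normc (c i) * p (F i).
Proof.
move=> hp hF; have [ht hs] := hp; elim: s => [|x s IH].
  rewrite (_ : sumA _ _ = zeroA); first by rewrite p_zero // big_nil.
  by apply: Aq_ext => k n; rewrite /sumA big_nil.
rewrite (_ : sumA _ _ = addA (scaleA (c x) (F x)) (sumA s (fun i => scaleA (c i) (F i)))); last first.
  by apply: Aq_ext => k n; rewrite /sumA big_cons.
rewrite big_cons; apply: le_trans (ht _ _ _ _) _.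
- exact: inA_scale.
- by apply: inA_sumA => i; apply: inA_scale.
by rewrite hs //; apply: lerD.
Qed.

Lemma decomp (R : realType) (u : Aq R) L :
  bounded_by L u -> u = sumA (box L L) (fun x => scaleA (u x.1 x.2) (mono x)).
Proof.
move=> hL; apply: Aq_ext => k n; rewrite /sumA.
rewrite (eq_bigr (fun x => if x == (k, n) then u k n else 0)); last first.
  move=> [a b] _; rewrite /scaleA /mono /=.
  case: eqP => [[-> ->]|ne]; first by rewrite eqxx mulr1.
  by case: eqP => [e|]; [by case: ne; rewrite e | rewrite mulr0].
rewrite sum_pick ?uniq_box //; case: ifP => // hb; apply: hL.
by move: hb; rewrite mem_box /= => /negbT; rewrite negb_and -!ltnNge => /orP[h|h]; [left|right].
Qed.

Lemma mono_mul (R : realType) (q : R[i]) (a b : nat * int) :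
  mulA q (mono a) (mono b) = scaleA (q ^ (a.1%:Z * b.2)) (mono ((a.1 + b.1)%N, a.2 + b.2)).
Proof.
apply: funext => k; apply: funext => n.
set L := maxn (maxn a.1 (absz a.2)) (maxn b.1 (absz b.2)).
have hb : forall x : nat * int, (x.1 <= maxn x.1 (absz x.2))%N && (absz x.2 <= maxn x.1 (absz x.2))%N.
  by move=> x; rewrite leq_maxl leq_maxr.
have bbx : forall x y : nat * int, bounded_by (maxn (maxn x.1 (absz x.2)) (maxn y.1 (absz y.2))) (@mono R x).
  move=> [x1 x2] [y1 y2] k' n' H; rewrite /mono; case: eqP => // -[e1 e2].
  by subst; simpl in H; lia.
have bby : forall x y : nat * int, bounded_by (maxn (maxn x.1 (absz x.2)) (maxn y.1 (absz y.2))) (@mono R y).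
  move=> [x1 x2] [y1 y2] k' n' H; rewrite /mono; case: eqP => // -[e1 e2].
  by subst; simpl in H; lia.
rewrite (mulA_formula q k n (inA_mono _ a) (inA_mono _ b) (bbx a b) (bby a b)).
have ma : a \in box L L by rewrite mem_box /L !leq_max !leqnn /= !orbT.
have mb : b \in box L L by rewrite mem_box /L !leq_max !leqnn /= !orbT.
rewrite (eq_bigr (fun a' => if a' == a then \sum_(b' <- box L L) mono b b'.1 b'.2 * q ^ (a'.1%:Z * b'.2) * ind k n a' b' else 0)); last first.
  move=> [a1 a2] _; rewrite /mono /=; case: eqP => [->|_]; first by apply: eq_bigr => b' _; rewrite mul1r.
  by rewrite big1 // => b' _; rewrite !mul0r.
rewrite sum_pick ?uniq_box // ma.
rewrite (eq_bigr (fun b' => if b' == b then q ^ (a.1%:Z * b'.2) * ind k n a b' else 0)); last first.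
  move=> [b1 b2] _; rewrite /mono /=; case: eqP => [->|_]; first by rewrite mul1r.
  by rewrite !mul0r.
by rewrite sum_pick ?uniq_box // mb /scaleA /ind /mono.
Qed.


Lemma p_mono_mul (R : realType) (q : R[i]) (p : Aq R -> R) (a b : nat * int) :
  is_seminormA p -> submultA q p ->
  Normc.normc q ^ (a.1%:Z * b.2) * p (mono ((a.1 + b.1)%N, a.2 + b.2)) <= p (mono a) * p (mono b).
Proof.
move=> [ht hs] hm; have := hm _ _ (inA_mono R a) (inA_mono R b).
rewrite mono_mul hs; last exact: inA_mono. set X := Normc.normc (q ^ _). have -> : X = Normc.normc q ^ (a.1%:Z * b.2) by exact: ncZ. move=> h; exact: h.
Qed.

Lemma p_mono0 (R : realType) (q : R[i]) (p : Aq R -> R) (b : nat * int) (n : int) :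
  is_seminormA p -> submultA q p ->
  p (mono (b.1, n + b.2)) <= p (mono (0%N, n)) * p (mono b).
Proof.
move=> hp hm; have := p_mono_mul (0%N, n) b hp hm.
by rewrite /= mul0r expr0z mul1r add0n.
Qed.

Lemma p_mono_0n (R : realType) (q : R[i]) (p : Aq R -> R) (M P : R) (n : int) :
  is_seminormA p -> submultA q p -> 0 <= M -> 0 <= P ->
  p (mono (0%N, 1)) <= M -> p (mono (0%N, -1)) <= M -> p (mono (0%N, 0)) <= P ->
  p (mono (0%N, n)) <= P * M ^+ absz n.
Proof.
move=> hp hm M0 P0 hM1 hM2 hP.
have g0 : forall x, 0 <= p (@mono R x) by move=> x; apply: p_ge0 => //; exact: inA_mono.
have gen : forall (s : int) (t : nat), (s = 1 \/ s = -1) ->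
    p (mono (0%N, s * t%:Z)) <= P * M ^+ t.
  move=> s t hs; elim: t => [|t IH].
    by rewrite mulr0 expr0 mulr1.
  have := p_mono0 (0%N, s) (s * t%:Z) hp hm; rewrite /= (_ : s * t%:Z + s = s * t.+1%:Z); last first.
    by rewrite -[t.+1]addn1 PoszD mulrDr mulr1.
  move=> h; apply: le_trans h _.
  rewrite exprS mulrCA mulrC; apply: ler_pM => //.
  by case: hs => ->.
case: n => t.
  by have := gen 1 t (or_introl erefl); rewrite mul1r.
have := gen (-1) t.+1 (or_intror erefl); rewrite mulN1r NegzE.
have -> : absz (- t.+1%:Z) = t.+1 by [].
done.
Qed.

Lemma conv_generic (R : realType) (q : R[i]) (p : Aq R -> R) (w : nat -> R) (K : nat) (M P : R) :
  is_seminormA p -> submultA q p -> 0 <= M -> 0 <= P ->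
  p (mono (0%N, 1)) <= M -> p (mono (0%N, -1)) <= M -> p (mono (0%N, 0)) <= P ->
  (forall k, (K < k)%N -> p (mono (k, 0)) = 0) ->
  (forall k, (k <= K)%N -> M <= w k) ->
  forall u, inA u -> p u <= (P * \sum_(k < K.+1) p (mono (k : nat, 0))) * pw w K u.
Proof.
move=> hp hm M0 P0 hM1 hM2 hP hz hw u hu.
set S := \sum_(k < K.+1) p (mono (k : nat, 0)).
have g0 : forall x, 0 <= p (@mono R x) by move=> x; apply: p_ge0 => //; exact: inA_mono.
have S0 : 0 <= S by apply: sumr_ge0 => k _.
have key : forall x, p (mono x) <= (P * S) * (if (x.1 <= K)%N then w x.1 ^+ absz x.2 else 0).
  move=> [k n]; have h := p_mono0 (k, 0) n hp hm; rewrite /= addr0 in h; rewrite /=.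
  case: ifP => hk; last first.
    by rewrite hz ?mulr0 in h; [rewrite mulr0 | rewrite ltnNge hk].
  apply: le_trans h _.
  have h1 := p_mono_0n n hp hm M0 P0 hM1 hM2 hP.
  have h2 : p (mono (k, 0)) <= S.
    have hk' : (k < K.+1)%N by [].
    by rewrite /S (bigD1 (Ordinal hk')) //= lerDl sumr_ge0.
  have h3 : M ^+ absz n <= w k ^+ absz n.
    by rewrite lerXn2r ?nnegrE ?hw // (le_trans M0) ?hw.
  rewrite mulrAC; apply: ler_pM => //.
  apply: le_trans h1 _; apply: ler_wpM2l => //.
rewrite {1}(decomp (bndP hu)).
apply: le_trans (p_sum _ (fun x => u x.1 x.2) hp (fun x => inA_mono R x)) _.
rewrite (pw_box w K hu (bndP hu)) mulr_sumr; apply: ler_sum => x _.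
have := key x; rewrite /wsum; case: ifP => hx key'.
  by rewrite mulrCA; apply: ler_wpM2l; [exact: nc_ge0 | exact: key'].
rewrite mulr0 in key' *; rewrite mulr_ge0_le0 //; exact: nc_ge0.
Qed.


Lemma bernoulli (R : realType) (x : R) (k : nat) : 1 <= x -> 1 + k%:R * (x - 1) <= x ^+ k.
Proof.
move=> hx; elim: k => [|k IH]; first by rewrite mul0r addr0 expr0.
have h0 : 0 <= k%:R :> R by [].
have h2 : 0 <= k%:R * ((x - 1) * (x - 1)) :> R by rewrite mulr_ge0 // -expr2 sqr_ge0.
have h : 1 + k.+1%:R * (x - 1) <= x * (1 + k%:R * (x - 1)) by rewrite -natr1; nra.
rewrite exprS; apply: le_trans h _; apply: ler_wpM2l => //; lra.
Qed.

Lemma grow (R : realType) (x B : R) : 1 < x -> exists K : nat, forall k, (K < k)%N -> B < x ^+ k.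
Proof.
move=> hx; set y := Num.max 0 B / (x - 1).
have y0 : 0 <= y by rewrite divr_ge0 // ?le_max ?lexx // subr_ge0 ltW.
exists (Num.Def.archi_bound y) => k hk.
have h1 := archi_boundP y0.
have h2 : (Num.Def.archi_bound y)%:R <= k%:R :> R by rewrite ler_nat ltnW.
have h3 : y * (x - 1) = Num.max 0 B by rewrite /y divfK // subr_eq0 gt_eqF.
have h4 : B <= Num.max 0 B by rewrite le_max lexx orbT.
apply: lt_le_trans (bernoulli k (ltW hx)).
have hx1 : 0 < x - 1 by rewrite subr_gt0.
have : y * (x - 1) < k%:R * (x - 1) by rewrite ltr_pM2r //; apply: lt_le_trans h2.
nra.
Qed.

Lemma vanish (R : realType) (x A : R) (f : nat -> R) :
  1 < x -> (forall k, 0 <= f k) -> (forall k, x ^+ k * f k <= A * f k) ->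
  exists K : nat, forall k, (K < k)%N -> f k = 0.
Proof.
move=> hx f0 hf; have [K hK] := grow A hx; exists K => k hk.
have := hK k hk; have := hf k; have := f0 k; nra.
Qed.

Lemma exprz_natM (R : realType) (r : R) (i : nat) (m : int) : r ^ (i%:Z * m) = (r ^+ i) ^ m.
Proof.
case: m => t; first by rewrite -PoszM -!exprnP exprM.
by rewrite NegzE mulrN -PoszM -!exprnN exprM.
Qed.

Lemma small_w (R : realType) (x W : R) (m : int) :
  0 < x -> x <= 1 -> 0 <= W -> x ^ m * (W * x) ^+ absz m <= W ^+ absz m.
Proof.
move=> x0 x1 W0; case: m => t.
  rewrite -exprnP exprMn /= mulrCA.
  have y0 : 0 <= x ^+ t by rewrite exprn_ge0 // ltW.
  have y1 : x ^+ t <= 1 by rewrite exprn_ile1 // ltW.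
  have w0 : 0 <= W ^+ t by rewrite exprn_ge0.
  by rewrite -[X in _ <= X]mulr1; apply: ler_wpM2l => //; rewrite mulr_ile1.
rewrite NegzE -exprnN /= exprMn mulrCA mulVf ?mulr1 //.
by rewrite expf_neq0 // gt_eqF.
Qed.

Lemma big_w (R : realType) (x W : R) (m : int) :
  1 <= x -> 0 <= W -> x ^ m * (W / x) ^+ absz m <= W ^+ absz m.
Proof.
move=> x1 W0; have x0 : 0 < x by apply: lt_le_trans x1.
case: m => t.
  rewrite -exprnP exprMn /= exprVn mulrCA mulfV ?mulr1 //.
  by rewrite expf_neq0 // gt_eqF.
rewrite NegzE -exprnN /= exprMn -exprVn.
have y0 : 0 <= x^-1 ^+ t.+1 by rewrite exprn_ge0 // invr_ge0 ltW.
have xi : x^-1 <= 1 by rewrite invf_le1.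
have xi0 : 0 <= x^-1 by rewrite invr_ge0 ltW.
have y1 : x^-1 ^+ t.+1 <= 1 by rewrite exprn_ile1.
have w0 : 0 <= W ^+ t.+1 by rewrite exprn_ge0.
rewrite exprVn mulrCA -exprVn -[X in _ <= X]mulr1; apply: ler_wpM2l => //.
by rewrite mulr_ile1.
Qed.

Lemma p_updown (R : realType) (q : R[i]) (p : Aq R -> R) (k : nat) :
  is_seminormA p -> submultA q p ->
  Normc.normc q ^+ k * p (mono (k, 0)) <= (p (mono (0%N, -1)) * p (mono (0%N, 1))) * p (mono (k, 0)) /\
  (Normc.normc q)^-1 ^+ k * p (mono (k, 0)) <= (p (mono (0%N, -1)) * p (mono (0%N, 1))) * p (mono (k, 0)).
Proof.
move=> hp hm.
have g0 : forall x, 0 <= p (@mono R x) by move=> x; apply: p_ge0 => //; exact: inA_mono.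
split.
  have h1 := p_mono_mul (k, -1) (0%N, 1) hp hm.
  have h2 := p_mono0 (k, 0) (-1) hp hm.
  rewrite /= mulr1 -exprnP addn0 addNr in h1; rewrite /= addr0 in h2.
  apply: le_trans h1 _; rewrite [X in _ <= X]mulrAC; apply: ler_wpM2r => //.
have h1 := p_mono_mul (k, 1) (0%N, -1) hp hm.
have h2 := p_mono0 (k, 0) 1 hp hm.
rewrite /= exprz_natM exprN1 addn0 addrN in h1; rewrite /= addr0 in h2.
rewrite exprVn; apply: le_trans h1 _; rewrite [X in _ <= X * _]mulrC [X in _ <= X]mulrAC.
by apply: ler_wpM2r => //.
Qed.


Lemma Mstuff (R : realType) (p : Aq R -> R) :
  let M := Num.max 1 (Num.max (p (mono (0%N, 1))) (p (mono (0%N, -1)))) in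
  let P := Num.max 1 (p (mono (0%N, 0))) in
  [/\ 1 <= M, 1 <= P, p (mono (0%N, 1)) <= M, p (mono (0%N, -1)) <= M & p (mono (0%N, 0)) <= P].
Proof.
move=> M P; split; rewrite /M /P ?le_max ?lexx ?orbT //.
Qed.

Lemma case_small (R : realType) (q : R[i]) :
  0 < Normc.normc q -> Normc.normc q < 1 ->
     (forall (D : R) (K : nat), 1 <= D -> 1 <= D * Normc.normc q ^+ K ->
        is_seminormA (pw (fun k => D * Normc.normc q ^+ k) K) /\
        submultA q (pw (fun k => D * Normc.normc q ^+ k) K)) /\
     (forall p : Aq R -> R, is_seminormA p -> submultA q p ->
        exists (c D : R) (K : nat), 1 <= D /\ 1 <= D * Normc.normc q ^+ K /\
          forall u, inA u -> p u <= c * pw (fun k => D * Normc.normc q ^+ k) K u).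
Proof.
set r := Normc.normc q => r0 r1.
have r0' : 0 <= r by apply: ltW.
have r1' : r <= 1 by apply: ltW.
split.
  move=> D K D1 DK.
  have D0 : 0 <= D by apply: le_trans D1.
  have hw1 : forall k, (k <= K)%N -> 1 <= D * r ^+ k.
    move=> k hk; apply: le_trans DK _; apply: ler_wpM2l => //; exact: ler_wiXn2l.
  split; first exact: pw_seminorm.
  apply: pw_submult => //.
    move=> i j hij; apply: ler_wpM2l => //; apply: ler_wiXn2l => //; exact: leq_addr.
  move=> i j m hij; rewrite exprz_natM exprD (mulrC (r ^+ i)) mulrA.
  apply: small_w; [exact: exprn_gt0 | exact: exprn_ile1 | by rewrite mulr_ge0 ?exprn_ge0].
move=> p hp hm.
have g0 : forall x, 0 <= p (@mono R x) by move=> x; apply: p_ge0 => //; exact: inA_mono.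
have [K hK] : exists K : nat, forall k, (K < k)%N -> p (mono (k, 0)) = 0.
  apply: (@vanish R r^-1 (p (mono (0%N, -1)) * p (mono (0%N, 1)))).
  - by rewrite invf_gt1.
  - by move=> k; apply: g0.
  - by move=> k; have [_ h] := p_updown k hp hm.
have [M1 P1 hM1 hM2 hP] := Mstuff p.
set M := Num.max 1 _ in M1 hM1 hM2; set P := Num.max 1 _ in P1 hP.
have rK0 : 0 < r ^+ K by apply: exprn_gt0.
set D := M / r ^+ K.
have DK : D * r ^+ K = M by rewrite /D divfK // gt_eqF.
have D1 : 1 <= D.
  rewrite /D mulr_ege1 // invf_ge1 //; exact: exprn_ile1.
have D0 : 0 <= D by apply: le_trans D1.
exists (P * \sum_(k < K.+1) p (mono (k : nat, 0))), D, K; split => //; split; first by rewrite DK.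
apply: (@conv_generic R q p _ K M P) => //.
- by apply: le_trans M1.
- by apply: le_trans P1.
move=> k hk; rewrite -DK; apply: ler_wpM2l => //; exact: ler_wiXn2l.
Qed.

Lemma case_big (R : realType) (q : R[i]) :
  1 < Normc.normc q ->
     (forall (D : R) (K : nat), 1 <= D -> 1 <= D / Normc.normc q ^+ K ->
        is_seminormA (pw (fun k => D / Normc.normc q ^+ k) K) /\
        submultA q (pw (fun k => D / Normc.normc q ^+ k) K)) /\
     (forall p : Aq R -> R, is_seminormA p -> submultA q p ->
        exists (c D : R) (K : nat), 1 <= D /\ 1 <= D / Normc.normc q ^+ K /\
          forall u, inA u -> p u <= c * pw (fun k => D / Normc.normc q ^+ k) K u).
Proof.
set r := Normc.normc q => r1.
have r0 : 0 < r by apply: lt_trans r1.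
have r1' : 1 <= r by apply: ltW.
have inv_le : forall a b : nat, (a <= b)%N -> (r ^+ b)^-1 <= (r ^+ a)^-1.
  move=> a b hab; rewrite lef_pV2 ?posrE ?exprn_gt0 //; exact: ler_weXn2l.
split.
  move=> D K D1 DK.
  have D0 : 0 <= D by apply: le_trans D1.
  have hw1 : forall k, (k <= K)%N -> 1 <= D / r ^+ k.
    move=> k hk; apply: le_trans DK _; apply: ler_wpM2l => //; exact: inv_le.
  split; first exact: pw_seminorm.
  apply: pw_submult => //.
    move=> i j hij; apply: ler_wpM2l => //; apply: inv_le => //; exact: leq_addr.
  move=> i j m hij; rewrite exprz_natM exprD invfM mulrA.
  rewrite [D / _ / _]mulrAC; apply: big_w; [exact: exprn_ege1 | by rewrite mulr_ge0 ?invr_ge0 ?exprn_ge0 // ltW].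
move=> p hp hm.
have g0 : forall x, 0 <= p (@mono R x) by move=> x; apply: p_ge0 => //; exact: inA_mono.
have [K hK] : exists K : nat, forall k, (K < k)%N -> p (mono (k, 0)) = 0.
  apply: (@vanish R r (p (mono (0%N, -1)) * p (mono (0%N, 1)))) => //.
  by move=> k; have [h _] := p_updown k hp hm.
have [M1 P1 hM1 hM2 hP] := Mstuff p.
set M := Num.max 1 _ in M1 hM1 hM2; set P := Num.max 1 _ in P1 hP.
have rK0 : 0 < r ^+ K by apply: exprn_gt0.
set D := M * r ^+ K.
have DK : D / r ^+ K = M by rewrite /D mulfK // gt_eqF.
have D1 : 1 <= D by rewrite /D mulr_ege1 // exprn_ege1.
have D0 : 0 <= D by apply: le_trans D1.
exists (P * \sum_(k < K.+1) p (mono (k : nat, 0))), D, K; split => //; split; first by rewrite DK.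
apply: (@conv_generic R q p _ K M P) => //.
- by apply: le_trans M1.
- by apply: le_trans P1.
move=> k hk; rewrite -DK; apply: ler_wpM2l => //; exact: inv_le.
Qed.

Unset Implicit Arguments.

Theorem mainTheorem16 (R : realType) (q : R[i]) :
  q != 0 -> Normc.normc q != 1 ->
  (Normc.normc q < 1 ->
     (forall (D : R) (K : nat), 1 <= D -> 1 <= D * Normc.normc q ^+ K ->
        is_seminormA (pw (fun k => D * Normc.normc q ^+ k) K) /\
        submultA q (pw (fun k => D * Normc.normc q ^+ k) K)) /\
     (forall p : Aq R -> R, is_seminormA p -> submultA q p ->
        exists (c D : R) (K : nat), 1 <= D /\ 1 <= D * Normc.normc q ^+ K /\
          forall u, inA u -> p u <= c * pw (fun k => D * Normc.normc q ^+ k) K u))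
  /\
  (1 < Normc.normc q ->
     (forall (D : R) (K : nat), 1 <= D -> 1 <= D / Normc.normc q ^+ K ->
        is_seminormA (pw (fun k => D / Normc.normc q ^+ k) K) /\
        submultA q (pw (fun k => D / Normc.normc q ^+ k) K)) /\
     (forall p : Aq R -> R, is_seminormA p -> submultA q p ->
        exists (c D : R) (K : nat), 1 <= D /\ 1 <= D / Normc.normc q ^+ K /\
          forall u, inA u -> p u <= c * pw (fun k => D / Normc.normc q ^+ k) K u)).
Proof.
move=> q0 _; split; last exact: case_big.
apply: case_small; rewrite lt_neqAle nc_ge0 andbT eq_sym.
by apply/eqP => /Normc.eq0_normc h; rewrite h eqxx in q0.
Qed.
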